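(* Let $A,B$ be effect algebras. The category $\beta_{A,B}$ of bimorphisms from $A,B$ is isomorphic to the category of cocones under the diagram $D_{A,B}\colon\int R(A)\times\int R(B)\to\mathbf{EA}$. Under this isomorphism, $C$-valued bimorphisms correspond exactly to cocones with apex $C$. Explicitly, a bimorphism $h$ corresponds to the cocone whose component at $(g_A,g_B)$, with $g_A\colon 2^{[n]}\to A$ and $g_B\colon 2^{[m]}\to B$, is $$X\mapsto \sum_{(i,j)\in X}h\bigl(g_A(\{i\}),g_B(\{j\})\bigr),\qquad X\subseteq[n]\times[m].$$ Conversely, a cocone $(v)$ corresponds to the bimorphism $h(a,b)=v_{\langle a\rangle,\langle b\rangle}(\{(1,1)\})$, where $\langle a\rangle\colon 2^{[2]}\to A$ is the observable with $\{1\}\mapsto a$ and $\{2\}\mapsto a^\perp$.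
   Context: An effect algebra is a partial algebra $(A;+,0,1)$, with a binary partial operation $+$ and constants $0,1$, satisfying: (E1) if $a+b$ is defined, then $b+a$ is defined and $a+b=b+a$; (E2) if $a+b$ and $(a+b)+c$ are defined, then $b+c$ and $a+(b+c)$ are defined and $(a+b)+c=a+(b+c)$; (E3) for every $a$ there is a unique $a^\perp$ such that $a+a^\perp=1$; (E4) if $a+1$ is defined, then $a=0$. One-element effect algebras are allowed. We write $a\perp b$ when $a+b$ is defined. Morphisms of effect algebras preserve $1$ and defined sums; $\mathbf{EA}$ is their category. Boolean algebras are effect algebras via: $x+y$ is defined iff $x\wedge y=0$, and then $x+y=x\vee y$. For $[n]=\{1,\dots,n\}$, $\mathbf{FinBool}$ is the full subcategory of Boolean algebras on the objects $2^{[n]}$, $n\in\mathbb N$. The category $\int R(A)$ has: - objects: pairs $(2^{[n]},g)$ with $g\colon 2^{[n]}\to A$ an effect-algebra morphism; - arrows $(2^{[n]},g)\to(2^{[n']},g')$: Boolean algebra morphisms $f\colon 2^{[n]}\to 2^{[n']}$ with $g'\circ f=g$. The coproduct of Boolean algebras is denoted $*$, and $2^{[n]}*2^{[m]}$ is identified with $2^{[n]\times[m]}$. For morphisms $s\colon 2^{[n]}\to 2^{[n']}$ and $t\colon 2^{[m]}\to 2^{[m']}$, $$(s*t)(X)=\bigcup_{(i,j)\in X}s(\{i\})\times t(\{j\}).$$ $D_{A,B}\colon\int R(A)\times\int R(B)\to\mathbf{EA}$ sends $\bigl((2^{[n]},g_A),(2^{[m]},g_B)\bigr)$ to $2^{[n]}*2^{[m]}$,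 and sends $(f_A,f_B)$ to $f_A*f_B$. A bimorphism from $A,B$ to $C$ is a map $h\colon A\times B\to C$ satisfying: - $h(1,1)=1$; - $a_1\perp a_2$ implies $h(a_1,b)\perp h(a_2,b)$ and $h(a_1+a_2,b)=h(a_1,b)+h(a_2,b)$; - symmetrically in the second argument. $\beta_{A,B}$ is the category whose objects are bimorphisms from $A,B$ (into any $C$), and whose morphisms $h\to h'$ are $\mathbf{EA}$-morphisms $f$ with $f\circ h=h'$. The category of cocones under $D_{A,B}$ has morphisms given by $\mathbf{EA}$-maps between apexes commuting with all components. *)

(* Defs.v *)
From mathcomp Require Import all_boot.
Set Implicit Arguments. Unset Strict Implicit. Unset Printing Implicit Defensive.

(* The partial operation + is a function into option; a + b defined <-> Some.
   The unique orthosupplement of (E3) is recorded as a field [eperp]. *)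
Record EffectAlgebra := {
  ecarrier :> Type;
  esum : ecarrier -> ecarrier -> option ecarrier;
  ezero : ecarrier;
  eone : ecarrier;
  eperp : ecarrier -> ecarrier;
  eaE1 : forall a b s, esum a b = Some s -> esum b a = Some s;
  eaE2 : forall a b c ab abc, esum a b = Some ab -> esum ab c = Some abc ->
           exists bc, esum b c = Some bc /\ esum a bc = Some abc;
  eaE3 : forall a, esum a (eperp a) = Some eone /\
           (forall b, esum a b = Some eone -> b = eperp a);
  eaE4 : forall a, (exists s, esum a eone = Some s) -> a = ezero
}.
Arguments esum {e}. Arguments ezero {e}. Arguments eone {e}. Arguments eperp {e}.

Definition ea_hom (A C : EffectAlgebra) (f : A -> C) : Prop :=
  f eone = eone /\ forall a b s, esum a b = Some s -> esum (f a) (f b) = Some (f s).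

(* Morphisms from the Boolean algebra {set T} (viewed as an effect algebra:
   X + Y defined iff X :&: Y = set0, and then X + Y = X :|: Y) into C. *)
Definition set_ea_hom (T : finType) (C : EffectAlgebra) (g : {set T} -> C) : Prop :=
  g setT = eone /\
  forall X Y : {set T}, X :&: Y = set0 -> esum (g X) (g Y) = Some (g (X :|: Y)).

(* Boolean algebra morphisms 2^[n] -> 2^[n'] ('I_n plays the role of [n]) *)
Definition bool_hom (n n' : nat) (f : {set 'I_n} -> {set 'I_n'}) : Prop :=
  f set0 = set0 /\ f setT = setT /\
  (forall X Y, f (X :|: Y) = f X :|: f Y) /\
  (forall X Y, f (X :&: Y) = f X :&: f Y) /\
  (forall X, f (~: X) = ~: f X).

Definition intR_obj (A : EffectAlgebra) (n : nat) (g : {set 'I_n} -> A) : Prop :=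
  set_ea_hom g.
Definition intR_arrow (A : EffectAlgebra) (n n' : nat)
    (g : {set 'I_n} -> A) (g' : {set 'I_n'} -> A) (f : {set 'I_n} -> {set 'I_n'}) : Prop :=
  bool_hom f /\ forall X, g' (f X) = g X.

(* coproduct of Boolean morphisms: (s * t)(X) = U_{(i,j) in X} s{i} x t{j} *)
Definition bprod (n n' m m' : nat) (s : {set 'I_n} -> {set 'I_n'})
    (t : {set 'I_m} -> {set 'I_m'}) (X : {set 'I_n * 'I_m}) : {set 'I_n' * 'I_m'} :=
  \bigcup_(p in X) setX (s [set p.1]) (t [set p.2]).

(* A family of components, indexed by the data of pairs of objects of
   ∫R(A) x ∫R(B); only its values at genuine objects matter. *)
Definition cocone_data (A B C : EffectAlgebra) :=
  forall (n m : nat), ({set 'I_n} -> A) -> ({set 'I_m} -> B) -> {set 'I_n * 'I_m} -> C.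

Definition is_cocone (A B C : EffectAlgebra) (v : cocone_data A B C) : Prop :=
  (forall n m gA gB, intR_obj gA -> intR_obj gB -> set_ea_hom (v n m gA gB)) /\
  (forall n n' m m' (gA : {set 'I_n} -> A) (gA' : {set 'I_n'} -> A)
          (gB : {set 'I_m} -> B) (gB' : {set 'I_m'} -> B) fA fB,
     intR_obj gA -> intR_obj gA' -> intR_obj gB -> intR_obj gB' ->
     intR_arrow gA gA' fA -> intR_arrow gB gB' fB ->
     forall X, v n' m' gA' gB' (bprod fA fB X) = v n m gA gB X).

Definition cocone_hom (A B C C' : EffectAlgebra) (v : cocone_data A B C)
    (v' : cocone_data A B C') (f : C -> C') : Prop :=
  ea_hom f /\
  forall n m gA gB, intR_obj gA -> intR_obj gB ->
    forall X, f (v n m gA gB X) = v' n m gA gB X.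

Definition is_bimorphism (A B C : EffectAlgebra) (h : A -> B -> C) : Prop :=
  h eone eone = eone /\
  (forall a1 a2 s b, esum a1 a2 = Some s -> esum (h a1 b) (h a2 b) = Some (h s b)) /\
  (forall a b1 b2 s, esum b1 b2 = Some s -> esum (h a b1) (h a b2) = Some (h a s)).

Definition bimorphism_hom (A B C C' : EffectAlgebra) (h : A -> B -> C)
    (h' : A -> B -> C') (f : C -> C') : Prop :=
  ea_hom f /\ forall a b, f (h a b) = h' a b.

Definition esum_list (C : EffectAlgebra) (s : seq C) : option C :=
  foldr (fun x acc => match acc with Some y => esum x y | None => None end)
        (Some ezero) s.

Definition bimorphism_terms (A B C : EffectAlgebra) (h : A -> B -> C) (n m : nat)
    (gA : {set 'I_n} -> A) (gB : {set 'I_m} -> B) (X : {set 'I_n * 'I_m}) : seq C :=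
  [seq h (gA [set p.1]) (gB [set p.2]) | p <- enum X].

Definition cocone_of_bimorphism (A B C : EffectAlgebra) (h : A -> B -> C)
    : cocone_data A B C :=
  fun n m gA gB X => odflt ezero (esum_list (bimorphism_terms h gA gB X)).

(* the observable <a> : 2^[2] -> A, {1} |-> a, {2} |-> a^perp
   (here [2] = 'I_2, with 1 ~ ord0 and 2 ~ ord_max) *)
Definition obs (A : EffectAlgebra) (a : A) (X : {set 'I_2}) : A :=
  if ord0 \in X then (if ord_max \in X then eone else a)
  else (if ord_max \in X then eperp a else ezero).

Definition bimorphism_of_cocone (A B C : EffectAlgebra) (v : cocone_data A B C)
    : A -> B -> C :=
  fun a b => v 2 2 (obs a) (obs b) [set (ord0, ord0)].

(* Main.v *)
From HB Require Import structures.
Require Import Defs.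
From mathcomp Require Import all_boot.
Set Implicit Arguments. Unset Strict Implicit. Unset Printing Implicit Defensive.
Set Warnings "-redundant-canonical-projection -notation-overridden".

Section EA.
Variable C : EffectAlgebra.

Definition oplus (x y : option C) : option C :=
  match x, y with Some a, Some b => esum a b | _, _ => None end.

Lemma perp1 : eperp (@eone C) = ezero.
Proof.
apply: eaE4; exists eone; apply: eaE1; exact: (eaE3 eone).1.
Qed.

Lemma perpK (a : C) : eperp (eperp a) = a.
Proof.
symmetry; apply: (eaE3 (eperp a)).2; apply: eaE1; exact: (eaE3 a).1.
Qed.

Lemma addr0 (a : C) : esum a ezero = Some a.
Proof.
rewrite -(perpK a); set c := eperp a.
have h1 := (eaE3 c).1.
have h2 : esum (@eone C) (eperp eone) = Some eone := (eaE3 eone).1.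
have [bc [hb hc]] := eaE2 h1 h2.
have Hbc : bc = eperp c by apply: (eaE3 c).2.
by rewrite -perp1 hb Hbc.
Qed.

Lemma add0r (a : C) : esum ezero a = Some a.
Proof. exact: eaE1 (addr0 a). Qed.

Lemma cancel0 (x y : C) : esum x y = Some x -> y = ezero.
Proof.
move=> /eaE1 h. have [bc [h1 h2]] := eaE2 h (eaE3 x).1.
rewrite (eaE3 x).1 in h1; case: h1 => ?; subst.
apply: eaE4; by exists eone.
Qed.

Lemma assocR (a b c ab r : C) : esum a b = Some ab -> esum ab c = Some r ->
  exists bc, esum b c = Some bc /\ esum a bc = Some r.
Proof. exact: eaE2. Qed.

Lemma assocL (a b c bc r : C) : esum b c = Some bc -> esum a bc = Some r ->
  exists ab, esum a b = Some ab /\ esum ab c = Some r.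
Proof.
move=> H2 H1. have E1 := eaE1 H1. have E2 := eaE1 H2.
have [ba [h1 h2]] := eaE2 E2 E1.
by exists ba; split; apply: eaE1.
Qed.

Lemma opt_eq (o1 o2 : option C) : (forall r, o1 = Some r -> o2 = Some r) ->
  (forall r, o2 = Some r -> o1 = Some r) -> o1 = o2.
Proof.
case: o1 => [x|] H1 H2; first by rewrite (H1 x).
case: o2 H1 H2 => [y|] // H1 H2; by have := H2 y erefl.
Qed.

Lemma oplusA : associative oplus.
Proof.
move=> [a|] [b|] [c|] //=; try by case: (esum a b).
apply: opt_eq => r /=.
- case Ebc: (esum b c) => [bc|] //= Er.
  have [ab [h1 h2]] := assocL Ebc Er. by rewrite h1.
- case Eab: (esum a b) => [ab|] //= Er.
  have [bc [h1 h2]] := assocR Eab Er. by rewrite h1.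
Qed.

Lemma oplusC : commutative oplus.
Proof.
move=> [a|] [b|] //=; rewrite /oplus.
case E: (esum a b) => [s|]; first by rewrite (eaE1 E).
by case E': (esum b a) => [s|] //; rewrite (eaE1 E') in E.
Qed.

Lemma oplus0 : left_id (Some ezero) oplus.
Proof. by move=> [a|] //=; rewrite /oplus add0r. Qed.

End EA.

HB.instance Definition _ (C : EffectAlgebra) := Monoid.isComLaw.Build (option C) (Some ezero) (@oplus C) (@oplusA C) (@oplusC C) (@oplus0 C).

Notation "\osum_ ( i <- r | P ) F" := (\big[@oplus _/Some ezero]_(i <- r | P) Some F)
  (at level 41, F at level 41, i, r at level 50).
Notation "\osum_ ( i <- r ) F" := (\big[@oplus _/Some ezero]_(i <- r) Some F)
  (at level 41, F at level 41, i, r at level 50).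
Notation "\osum_ ( i 'in' A ) F" := (\big[@oplus _/Some ezero]_(i in A) Some F)
  (at level 41, F at level 41, i, A at level 50).
Notation "\osum_ ( i : T ) F" := (\big[@oplus _/Some ezero]_(i : T) Some F)
  (at level 41, F at level 41, i, T at level 50).

Lemma esum_list_big (C : EffectAlgebra) (l : seq C) :
  esum_list l = \osum_(x <- l) x.
Proof.
rewrite /esum_list; elim: l => [|x l IH]; first by rewrite big_nil.
by rewrite big_cons /= IH; case: (\big[_/_]_(_ <- l) _).
Qed.

Lemma oplus_some (C : EffectAlgebra) (x y : option C) s : oplus x y = Some s ->
  exists a b, [/\ x = Some a, y = Some b & esum a b = Some s].
Proof. by case: x => [a|] //; case: y => [b|] // H; exists a, b. Qed.

Lemma big_hom (C D : EffectAlgebra) (phi : C -> D) :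
  phi ezero = ezero -> (forall a b s, esum a b = Some s -> esum (phi a) (phi b) = Some (phi s)) ->
  forall (I : Type) (r : seq I) (P : pred I) (F : I -> C) s,
  \osum_(i <- r | P i) (F i) = Some s -> \osum_(i <- r | P i) (phi (F i)) = Some (phi s).
Proof.
move=> h0 hs I r P F; elim: r => [|x r IH] s; first by rewrite !big_nil => -[<-]; rewrite h0.
rewrite !big_cons; case: (P x) => //; last exact: IH.
move/oplus_some => [a [b [[<-] Hb Hs]]].
by rewrite (IH _ Hb) /=; apply: hs.
Qed.

Lemma sea_zero (C : EffectAlgebra) (T : finType) (g : {set T} -> C) : set_ea_hom g -> g set0 = ezero.
Proof.
move=> [h1 h2]; apply: eaE4; exists eone.
by have := h2 set0 setT; rewrite set0I set0U h1 => ->.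
Qed.

Lemma sea_perp (C : EffectAlgebra) (T : finType) (g : {set T} -> C) (X : {set T}) :
  set_ea_hom g -> g (~: X) = eperp (g X).
Proof.
move=> [h1 h2]; apply: (eaE3 (g X)).2.
by rewrite h2 ?setICr // setUCr h1.
Qed.

Lemma sea_big (C : EffectAlgebra) (T : finType) (g : {set T} -> C) :
  set_ea_hom g -> forall X : {set T}, \osum_(i in X) (g [set i]) = Some (g X).
Proof.
move=> hg; have [h1 h2] := hg.
suff H : forall k (X : {set T}), #|X| = k -> \osum_(i in X) (g [set i]) = Some (g X).
  by move=> X; apply: (H _ X erefl).
elim=> [|k IH] X hX.
  by move/eqP: hX; rewrite cards_eq0 => /eqP ->; rewrite big_set0 sea_zero.
have /set0Pn [x xX] : X != set0 by rewrite -card_gt0 hX.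
rewrite -(setD1K xX) big_setU1 ?setD11 // IH; last by move: hX; rewrite (cardsD1 x) xX => -[].
rewrite /= h2 //; apply/setP => y; rewrite !inE.
by case: eqP => // ->; rewrite eqxx.
Qed.

Lemma gw_def (C : EffectAlgebra) (T : finType) (w : T -> C) :
  \osum_(t : T) (w t) = Some eone -> forall X : {set T},
  \osum_(t in X) (w t) = Some (odflt ezero (\osum_(t in X) (w t))).
Proof.
move=> H X.
have : \osum_(t in setT) (w t) = Some eone by rewrite -H; apply: eq_bigl => t; rewrite in_setT.
rewrite (big_setID X) setTI => /oplus_some [a [b [-> _ _]]] //.
Qed.

Lemma gw_hom (C : EffectAlgebra) (T : finType) (w : T -> C) :
  \osum_(t : T) (w t) = Some eone ->
  set_ea_hom (fun X : {set T} => odflt ezero (\osum_(t in X) (w t))).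
Proof.
move=> H; split.
  by rewrite -(@eq_bigl _ _ _ _ _ xpredT) ?H // => t; rewrite in_setT.
move=> X Y hXY.
have hd : [disjoint X & Y] by rewrite -setI_eq0 hXY.
have := gw_def H (X :|: Y).
have E : \osum_(t in X :|: Y) (w t) = \osum_(t in [predU X & Y]) (w t).
  by apply: eq_bigl => t; rewrite !inE.
rewrite E bigU // => /oplus_some [a [b [ha hb hs]]].
by rewrite ha hb /= hs.
Qed.

Section Bim.
Variables (A B C : EffectAlgebra) (h : A -> B -> C).
Hypothesis hb : is_bimorphism h.

Lemma h0l b : h ezero b = ezero.
Proof. apply: (@cancel0 _ (h ezero b)); apply: hb.2.1; exact: addr0. Qed.

Lemma h0r a : h a ezero = ezero.
Proof. apply: (@cancel0 _ (h a ezero)); apply: hb.2.2; exact: addr0. Qed.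

Lemma rect n m (gA : {set 'I_n} -> A) (gB : {set 'I_m} -> B) :
  set_ea_hom gA -> set_ea_hom gB -> forall X Y,
  \osum_(p in setX X Y) (h (gA [set p.1]) (gB [set p.2])) = Some (h (gA X) (gB Y)).
Proof.
move=> hA hB X Y.
have E : \osum_(p in setX X Y) (h (gA [set p.1]) (gB [set p.2])) =
  \big[@oplus C/Some ezero]_(i in X) \big[@oplus C/Some ezero]_(j in Y) Some (h (gA [set i]) (gB [set j])).
  rewrite pair_big_dep; apply: eq_bigl => -[i j]; by rewrite in_setX.
rewrite E (eq_bigr (fun i => Some (h (gA [set i]) (gB Y)))); last first.
  move=> i _; apply: (@big_hom _ _ (h (gA [set i]))); first exact: h0r.
    by move=> ? ? ?; apply: hb.2.2.
  exact: sea_big.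
apply: (@big_hom _ _ (fun a => h a (gB Y))); first exact: h0l.
  by move=> ? ? ?; apply: hb.2.1.
exact: sea_big.
Qed.

Lemma total n m (gA : {set 'I_n} -> A) (gB : {set 'I_m} -> B) :
  set_ea_hom gA -> set_ea_hom gB ->
  \osum_(p : 'I_n * 'I_m) (h (gA [set p.1]) (gB [set p.2])) = Some eone.
Proof.
move=> hA hB; have := rect hA hB setT setT.
rewrite hA.1 hB.1 hb.1 => <-; apply: eq_bigl => -[i j]; by rewrite in_setX !in_setT.
Qed.

End Bim.

Lemma terms_eq (A B C : EffectAlgebra) (h : A -> B -> C) n m (gA : {set 'I_n} -> A) (gB : {set 'I_m} -> B) X :
  esum_list (bimorphism_terms h gA gB X) = \osum_(p in X) (h (gA [set p.1]) (gB [set p.2])).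
Proof. by rewrite esum_list_big /bimorphism_terms big_map big_enum. Qed.

Lemma coc_eq (A B C : EffectAlgebra) (h : A -> B -> C) n m (gA : {set 'I_n} -> A) (gB : {set 'I_m} -> B) X :
  cocone_of_bimorphism h gA gB X = odflt ezero (\osum_(p in X) (h (gA [set p.1]) (gB [set p.2]))).
Proof. by rewrite /cocone_of_bimorphism terms_eq. Qed.

Lemma sea_ext (C : EffectAlgebra) (T : finType) (f f' : {set T} -> C) :
  set_ea_hom f -> (forall X, f X = f' X) -> set_ea_hom f'.
Proof. by move=> [h1 h2] E; split; [rewrite -E | move=> X Y; rewrite -!E; apply: h2]. Qed.

Lemma bool_disj n n' (f : {set 'I_n} -> {set 'I_n'}) : bool_hom f ->
  forall i j, i != j -> f [set i] :&: f [set j] = set0.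
Proof.
move=> [h0 [_ [_ [hI _]]]] i j hij; rewrite -hI.
suff -> : [set i] :&: [set j] = set0 by [].
apply/setP => k; rewrite !inE; case: (eqVneq k i) => // ->.
by rewrite (negbTE hij).
Qed.

Lemma part1 (A B C : EffectAlgebra) (h : A -> B -> C) : is_bimorphism h ->
  is_cocone (cocone_of_bimorphism h) /\
  (forall n m (gA : {set 'I_n} -> A) (gB : {set 'I_m} -> B),
     intR_obj gA -> intR_obj gB -> forall X,
     esum_list (bimorphism_terms h gA gB X) = Some (cocone_of_bimorphism h gA gB X)).
Proof.
move=> hb; split; last first.
  move=> n m gA gB hA hB X; rewrite coc_eq terms_eq.
  exact: gw_def (total hb hA hB) X.
split.
  move=> n m gA gB hA hB; apply: sea_ext (gw_hom (total hb hA hB)) _.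
  by move=> X; rewrite coc_eq.
move=> n n' m m' gA gA' gB gB' fA fB hA hA' hB hB' [bA eA] [bB eB] X.
rewrite !coc_eq; congr odflt.
pose F q := if q \in X then setX (fA [set q.1]) (fB [set q.2]) else set0.
have -> : bprod fA fB X = \bigcup_q F q by rewrite /bprod big_mkcond.
rewrite partition_disjoint_bigcup; last first.
  move=> [i1 i2] [j1 j2] hne; rewrite -setI_eq0 /F.
  case: ((i1, i2) \in X); last by rewrite set0I.
  case: ((j1, j2) \in X); last by rewrite setI0.
  apply/eqP/setP => -[p1 p2]; rewrite !inE /=.
  move: hne; rewrite xpair_eqE negb_and => /orP [] hne.
    have /setP /(_ p1) := bool_disj bA hne; rewrite !inE => Hk.
    apply/negbTE/negP => /andP [/andP [a1 a2] /andP [b1 b2]].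
    by rewrite a1 b1 in Hk.
  have /setP /(_ p2) := bool_disj bB hne; rewrite !inE => Hk.
  apply/negbTE/negP => /andP [/andP [a1 a2] /andP [b1 b2]].
  by rewrite a2 b2 in Hk.
rewrite [RHS]big_mkcond; apply: eq_bigr => q _; rewrite /F.
case: (q \in X); last by rewrite big_set0.
by rewrite (rect hb hA' hB') eA eB.
Qed.

Lemma perpaddl (C : EffectAlgebra) (a : C) : esum (eperp a) a = Some eone.
Proof. exact: eaE1 (eaE3 a).1. Qed.

Lemma obs_hom (A : EffectAlgebra) (a : A) : set_ea_hom (obs a).
Proof.
split; first by rewrite /obs !inE.
move=> X Y hXY.
have d0 : ~~ ((ord0 \in X) && (ord0 \in Y)).
  by move/setP: hXY => /(_ ord0); rewrite !inE => ->.
have d1 : ~~ ((ord_max \in X) && (ord_max \in Y)).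
  by move/setP: hXY => /(_ ord_max); rewrite !inE => ->.
rewrite /obs !inE; move: d0 d1.
case: (ord0 \in X); case: (ord0 \in Y); case: (ord_max \in X); case: (ord_max \in Y) => //= _ _;
  by rewrite ?addr0 ?add0r ?(eaE3 a).1 ?perpaddl.
Qed.

Lemma obs0 (A : EffectAlgebra) (a : A) : obs a [set ord0] = a.
Proof. by rewrite /obs !inE. Qed.

Definition fY n (Z : {set 'I_n}) (S : {set 'I_2}) : {set 'I_n} :=
  [set k | ((ord0 \in S) && (k \in Z)) || ((ord_max \in S) && (k \notin Z))].

Lemma fY0 n (Z : {set 'I_n}) : fY Z [set ord0] = Z.
Proof. by apply/setP => k; rewrite !inE /= orbF. Qed.

Lemma fY_arrow (A : EffectAlgebra) n (gA : {set 'I_n} -> A) (Z : {set 'I_n}) :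
  set_ea_hom gA -> intR_arrow (obs (gA Z)) gA (fY Z).
Proof.
move=> hg; split.
  split; first by apply/setP => k; rewrite !inE.
  split; first by apply/setP => k; rewrite !inE; case: (k \in Z).
  split.
    move=> X Y; apply/setP => k; rewrite !inE.
    by case: (k \in Z); case: (ord0 \in X); case: (ord0 \in Y); case: (ord_max \in X); case: (ord_max \in Y).
  split.
    move=> X Y; apply/setP => k; rewrite !inE.
    by case: (k \in Z); case: (ord0 \in X); case: (ord0 \in Y); case: (ord_max \in X); case: (ord_max \in Y).
  move=> X; apply/setP => k; rewrite !inE.
  by case: (k \in Z); case: (ord0 \in X); case: (ord_max \in X).
move=> S; rewrite /obs.
case E0: (ord0 \in S); case E1: (ord_max \in S).
- have -> : fY Z S = setT by apply/setP => k; rewrite !inE E0 E1; case: (k \in Z).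
  exact: hg.1.
- have -> : fY Z S = Z by apply/setP => k; rewrite !inE E0 E1 orbF.
  done.
- have -> : fY Z S = ~: Z by apply/setP => k; rewrite !inE E0 E1.
  exact: sea_perp.
- have -> : fY Z S = set0 by apply/setP => k; rewrite !inE E0 E1.
  exact: sea_zero.
Qed.

Lemma Lcoc (A B C : EffectAlgebra) (v : cocone_data A B C) : is_cocone v ->
  forall n m (gA : {set 'I_n} -> A) (gB : {set 'I_m} -> B),
  intR_obj gA -> intR_obj gB -> forall Z1 Z2,
  v 2 2 (obs (gA Z1)) (obs (gB Z2)) [set (ord0, ord0)] = v n m gA gB (setX Z1 Z2).
Proof.
move=> [_ hv] n m gA gB hA hB Z1 Z2.
rewrite -(hv _ _ _ _ _ _ _ _ _ _ (obs_hom _) hA (obs_hom _) hB (fY_arrow Z1 hA) (fY_arrow Z2 hB)).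
by rewrite /bprod big_set1 /= !fY0.
Qed.

Definition i0 : 'I_3 := @Ordinal 3 0 isT.
Definition i1 : 'I_3 := @Ordinal 3 1 isT.

Lemma three (A : EffectAlgebra) (a1 a2 s : A) : esum a1 a2 = Some s ->
  exists g : {set 'I_3} -> A, [/\ set_ea_hom g, g [set i0] = a1, g [set i1] = a2
    & g ([set i0] :|: [set i1]) = s].
Proof.
move=> Hs.
pose w (k : 'I_3) := match val k with 0 => a1 | 1 => a2 | _ => eperp s end.
have tot : \osum_(t : 'I_3) (w t) = Some eone.
  rewrite !big_ord_recl big_ord0 /=.
  rewrite /oplus addr0.
  have := @oplusA A (Some a1) (Some a2) (Some (eperp s)).
  by rewrite /oplus /= Hs (eaE3 s).1.
have hg := gw_hom tot.
exists (fun X : {set 'I_3} => odflt ezero (\osum_(t in X) (w t))).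
have g0 : odflt ezero (\osum_(t in [set i0]) (w t)) = a1 by rewrite big_set1.
have g1 : odflt ezero (\osum_(t in [set i1]) (w t)) = a2 by rewrite big_set1.
split => //.
have := hg.2 [set i0] [set i1].
rewrite g0 g1 Hs => H.
suff /H [] : [set i0] :&: [set i1] = set0 by [].
by apply/setP => k; rewrite !inE; case: (eqVneq k i0) => // ->.
Qed.

Lemma i01 : [set i0] :&: [set i1] = set0.
Proof. by apply/setP => k; rewrite !inE; case: (eqVneq k i0) => // ->. Qed.

Lemma setXUl' (T1 T2 : finType) (X1 X2 : {set T1}) (Y : {set T2}) :
  setX (X1 :|: X2) Y = setX X1 Y :|: setX X2 Y.
Proof. by apply/setP => -[a b]; rewrite !inE; case: (a \in X1); case: (a \in X2); case: (b \in Y). Qed.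

Lemma setXUr' (T1 T2 : finType) (X : {set T1}) (Y1 Y2 : {set T2}) :
  setX X (Y1 :|: Y2) = setX X Y1 :|: setX X Y2.
Proof. by apply/setP => -[a b]; rewrite !inE; case: (a \in X); case: (b \in Y1); case: (b \in Y2). Qed.

Lemma setXI0l (T1 T2 : finType) (X1 X2 : {set T1}) (Y : {set T2}) :
  X1 :&: X2 = set0 -> setX X1 Y :&: setX X2 Y = set0.
Proof.
move=> H; apply/setP => -[a b]; move/setP: H => /(_ a); rewrite !inE.
by case: (a \in X1); case: (a \in X2); case: (b \in Y).
Qed.

Lemma setXI0r (T1 T2 : finType) (X : {set T1}) (Y1 Y2 : {set T2}) :
  Y1 :&: Y2 = set0 -> setX X Y1 :&: setX X Y2 = set0.
Proof.
move=> H; apply/setP => -[a b]; move/setP: H => /(_ b); rewrite !inE.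
by case: (a \in X); case: (b \in Y1); case: (b \in Y2).
Qed.

Definition u1 (A : EffectAlgebra) (X : {set 'I_1}) : A := if ord0 \in X then eone else ezero.
Definition f1 (S : {set 'I_2}) : {set 'I_1} := [set k | ord0 \in S].

Lemma u1_hom (A : EffectAlgebra) : set_ea_hom (@u1 A).
Proof.
split; first by rewrite /u1 inE.
move=> X Y hXY; have := hXY; move/setP => /(_ ord0); rewrite /u1 !inE.
by case: (ord0 \in X); case: (ord0 \in Y) => //= _; rewrite ?addr0 ?add0r.
Qed.

Lemma f1_arrow (A : EffectAlgebra) : intR_arrow (obs (@eone A)) (@u1 A) f1.
Proof.
split.
  split; first by apply/setP => k; rewrite !inE.
  split; first by apply/setP => k; rewrite !inE.
  split; first by move=> X Y; apply/setP => k; rewrite !inE.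
  split; first by move=> X Y; apply/setP => k; rewrite !inE.
  by move=> X; apply/setP => k; rewrite !inE.
move=> X; rewrite /u1 /obs /f1 !inE.
by case: (ord0 \in X); case: (ord_max \in X); rewrite ?perp1.
Qed.

Lemma part2 (A B C : EffectAlgebra) (v : cocone_data A B C) : is_cocone v ->
  is_bimorphism (bimorphism_of_cocone v).
Proof.
move=> hv; split.
  rewrite /bimorphism_of_cocone -(hv.2 _ _ _ _ _ _ _ _ _ _ (obs_hom _) (@u1_hom A) (obs_hom _) (@u1_hom B)
    (@f1_arrow A) (@f1_arrow B)).
  have -> : bprod f1 f1 [set (ord0, ord0)] = setT.
    by rewrite /bprod big_set1; apply/setP => -[i j]; rewrite !inE.
  exact: (hv.1 _ _ _ _ (@u1_hom A) (@u1_hom B)).1.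
split.
  move=> a1 a2 s b Hs.
  have [g [hg g0 g1 g01]] := three Hs.
  rewrite /bimorphism_of_cocone -g0 -g1 -g01 -(obs0 b) !(Lcoc hv hg (obs_hom b)) setXUl'.
  apply: (hv.1 _ _ _ _ hg (obs_hom b)).2.
  exact: setXI0l i01.
move=> a b1 b2 s Hs.
have [g [hg g0 g1 g01]] := three Hs.
rewrite /bimorphism_of_cocone -g0 -g1 -g01 -(obs0 a) !(Lcoc hv (obs_hom a) hg) setXUr'.
apply: (hv.1 _ _ _ _ (obs_hom a) hg).2.
exact: setXI0r i01.
Qed.

Lemma part3 (A B C : EffectAlgebra) (h : A -> B -> C) a b :
  bimorphism_of_cocone (cocone_of_bimorphism h) a b = h a b.
Proof. by rewrite /bimorphism_of_cocone coc_eq big_set1 /= !obs0. Qed.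

Lemma part4 (A B C : EffectAlgebra) (v : cocone_data A B C) : is_cocone v ->
  forall n m (gA : {set 'I_n} -> A) (gB : {set 'I_m} -> B),
  intR_obj gA -> intR_obj gB -> forall X,
  cocone_of_bimorphism (bimorphism_of_cocone v) gA gB X = v n m gA gB X.
Proof.
move=> hv n m gA gB hA hB X; rewrite coc_eq.
rewrite (eq_bigr (fun p => Some (v n m gA gB [set p]))).
  by rewrite sea_big //; exact: (hv.1 _ _ _ _ hA hB).
move=> [i j] _ /=; rewrite /bimorphism_of_cocone (Lcoc hv hA hB).
congr (Some (v _ _ _ _ _)); apply/setP => -[x y]; rewrite !inE.
by rewrite xpair_eqE.
Qed.

Lemma hom0 (C D : EffectAlgebra) (f : C -> D) : ea_hom f -> f ezero = ezero.
Proof. move=> hf; apply: (@cancel0 _ (f ezero)); apply: hf.2; exact: addr0. Qed.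

Lemma part5 (A B C C' : EffectAlgebra) (h : A -> B -> C) (h' : A -> B -> C') (f : C -> C') :
  is_bimorphism h -> is_bimorphism h' ->
  (bimorphism_hom h h' f <-> cocone_hom (cocone_of_bimorphism h) (cocone_of_bimorphism h') f).
Proof.
move=> hb hb'; split.
  move=> [hf hfh]; split => // n m gA gB hA hB X.
  rewrite !coc_eq.
  have E := gw_def (total hb hA hB) X.
  have E2 := big_hom (hom0 hf) hf.2 E.
  have E3 : \osum_(p in X) (h' (gA [set p.1]) (gB [set p.2])) =
     Some (f (odflt ezero (\osum_(p in X) (h (gA [set p.1]) (gB [set p.2]))))).
    by rewrite -E2; apply: eq_bigr => p _; rewrite hfh.
  by rewrite E3.
move=> [hf hv]; split => // a b.
have := hv 2 2 (obs a) (obs b) (obs_hom a) (obs_hom b) [set (ord0, ord0)].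
by rewrite !coc_eq !big_set1 /= !obs0.
Qed.

Theorem mainTheorem5 (A B : EffectAlgebra) :
  (* bimorphisms h into C give cocones with apex C (the sums are defined) *)
  (forall (C : EffectAlgebra) (h : A -> B -> C), is_bimorphism h ->
     is_cocone (cocone_of_bimorphism h) /\
     (forall n m (gA : {set 'I_n} -> A) (gB : {set 'I_m} -> B),
        intR_obj gA -> intR_obj gB -> forall X,
        esum_list (bimorphism_terms h gA gB X)
          = Some (cocone_of_bimorphism h gA gB X))) /\
  (* cocones with apex C give C-valued bimorphisms *)
  (forall (C : EffectAlgebra) (v : cocone_data A B C), is_cocone v ->
     is_bimorphism (bimorphism_of_cocone v)) /\
  (* the two assignments are mutually inverse on objects *)
  (forall (C : EffectAlgebra) (h : A -> B -> C), is_bimorphism h ->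
     forall a b, bimorphism_of_cocone (cocone_of_bimorphism h) a b = h a b) /\
  (forall (C : EffectAlgebra) (v : cocone_data A B C), is_cocone v ->
     forall n m (gA : {set 'I_n} -> A) (gB : {set 'I_m} -> B),
       intR_obj gA -> intR_obj gB -> forall X,
       cocone_of_bimorphism (bimorphism_of_cocone v) gA gB X = v n m gA gB X) /\
  (* and (acting as the identity on underlying EA-maps) bijectively on morphisms *)
  (forall (C C' : EffectAlgebra) (h : A -> B -> C) (h' : A -> B -> C') (f : C -> C'),
     is_bimorphism h -> is_bimorphism h' ->
     (bimorphism_hom h h' f <->
      cocone_hom (cocone_of_bimorphism h) (cocone_of_bimorphism h') f)).
Proof.
split; first exact: part1.
split; first exact: part2.
split; first by move=> C h _ a b; exact: part3.
split; first exact: part4.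
exact: part5.
Qed.
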